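(* Consider a region discretized by the FDTD-Q scheme described in the context, with $0<\Delta t<\Delta t_{\mathrm{CFL,gen}}=2/\rho\!\left(\frac{1}{\hbar}(D_V'')^{-1/2}H(D_V'')^{-1/2}\right)$ ($\rho$ the spectral radius). Let $\mathcal{P}_\dagger^n$ ($n=0,\dots,n_t$) and $\mathcal{I}_{P\dagger}^{n+\frac12}$ ($n=0,\dots,n_t-1$) be real numbers (representing the probability of, and probability current leaving, the space outside the region) such that $\mathcal{P}_\dagger^n\ge0$ for all $n=0,\dots,n_t$, $$\frac{\mathcal{P}_\dagger^{n+1}-\mathcal{P}_\dagger^n}{\Delta t}=-\mathcal{I}_{P\dagger}^{n+\frac12},\qquad n=0,\dots,n_t-1,$$ and $\mathcal{I}_P^{n+\frac12}=-\mathcal{I}_{P\dagger}^{n+\frac12}$ for $n=0,\dots,n_t-1$. Then $\mathcal{P}^n\le\mathcal{P}_{\max}:=\mathcal{P}^0+\mathcal{P}_\dagger^0$ for all $n=0,1,\dots,n_t$.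
   Context: Fix constants $\hbar>0$, $m>0$, cell sizes $\Delta x,\Delta y,\Delta z>0$, positive integers $n_x,n_y,n_z,n_t$ and a time step $\Delta t>0$. The region is a box made of $n_x\times n_y\times n_z$ primary cells of size $\Delta x\times\Delta y\times\Delta z$, with primary nodes $(i,j,k)$, $1\le i\le n_x+1$, $1\le j\le n_y+1$, $1\le k\le n_z+1$. Let $N=(n_x+1)(n_y+1)(n_z+1)$; vectors indexed by nodes use the ordering $i+(j-1)(n_x+1)+(k-1)(n_x+1)(n_y+1)$. Real potential values $U_{i,j,k}$ are given at the nodes; $D_U$ is the $N\times N$ diagonal matrix containing them. Let $I_p$ be the $p\times p$ identity, $\tilde I_p=\mathrm{diag}(\tfrac12,1,\dots,1,\tfrac12)$ ($p\times p$), $W_p=[0_{p\times1}\ I_p]-[I_p\ 0_{p\times 1}]$ ($p\times(p+1)$), $\otimes$ the Kronecker product, and $e\{p,q\}$ the $q\times 1$ vector with $1$ in position $p$ and zeros elsewhere. Define $D_V''=\Delta x\Delta y\Delta z\,\tilde I_{n_z+1}\otimes\tilde I_{n_y+1}\otimes\tilde I_{n_x+1}$; $D=[D_x\ D_y\ D_z]$ with $D_x=-I_{n_z+1}\otimes I_{n_y+1}\otimes W_{n_x}^T$, $D_y=-I_{n_z+1}\otimes W_{n_y}^T\otimes I_{n_x+1}$, $D_z=-W_{n_z}^T\otimes I_{n_y+1}\otimes I_{n_x+1}$; $D_S''=\mathrm{diag}(\Delta y\Delta z\,\tilde I_{n_z+1}\otimes\tilde I_{n_y+1}\otimes I_{n_x},\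 \Delta x\Delta z\,\tilde I_{n_z+1}\otimes I_{n_y}\otimes\tilde I_{n_x+1},\ \Delta x\Delta y\,I_{n_z}\otimes\tilde I_{n_y+1}\otimes\tilde I_{n_x+1})$; $D_l'=\mathrm{diag}(\Delta x\, I_{n_x(n_y+1)(n_z+1)},\ \Delta y\, I_{(n_x+1)n_y(n_z+1)},\ \Delta z\, I_{(n_x+1)(n_y+1)n_z})$; $H=\frac{\hbar^2}{2m}D D_S''(D_l')^{-1}D^T+D_V''D_U$; $\mathbf{P}=\begin{bmatrix}D_V''&-\frac{\Delta t}{2\hbar}H\\-\frac{\Delta t}{2\hbar}H&D_V''\end{bmatrix}$. Boundary (''hanging'') variables: $L=[L_W\ L_E\ L_S\ L_N\ L_B\ L_T]$ with $L_W=I_{n_z+1}\otimes I_{n_y+1}\otimes e\{1,n_x+1\}$, $L_E=I_{n_z+1}\otimes I_{n_y+1}\otimes e\{n_x+1,n_x+1\}$, $L_S=I_{n_z+1}\otimes e\{1,n_y+1\}\otimes I_{n_x+1}$, $L_N=I_{n_z+1}\otimes e\{n_y+1,n_y+1\}\otimes I_{n_x+1}$, $L_B=e\{1,n_z+1\}\otimes I_{n_y+1}\otimes I_{n_x+1}$, $L_T=e\{n_z+1,n_z+1\}\otimes I_{n_y+1}\otimes I_{n_x+1}$; let $M$ be the number of columns of $L$. $D_{\hat n}=\mathrm{diag}(-I_{(n_y+1)(n_z+1)},I_{(n_y+1)(n_z+1)},-I_{(n_x+1)(n_z+1)},I_{(n_x+1)(n_z+1)},-I_{(n_x+1)(n_y+1)},I_{(n_x+1)(n_y+1)})$;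 $D_{S,b}''=\mathrm{diag}(\Delta y\Delta z\,\tilde I_{n_z+1}\otimes\tilde I_{n_y+1},\ \Delta y\Delta z\,\tilde I_{n_z+1}\otimes\tilde I_{n_y+1},\ \Delta x\Delta z\,\tilde I_{n_z+1}\otimes\tilde I_{n_x+1},\ \Delta x\Delta z\,\tilde I_{n_z+1}\otimes\tilde I_{n_x+1},\ \Delta x\Delta y\,\tilde I_{n_y+1}\otimes\tilde I_{n_x+1},\ \Delta x\Delta y\,\tilde I_{n_y+1}\otimes\tilde I_{n_x+1})$; $H_\perp=\frac{\hbar^2}{2m}L D_{\hat n}D_{S,b}''$. FDTD-Q scheme: real vectors $\psi_R^n\in\mathbb{R}^N$ and $\psi_I^{n-\frac12}\in\mathbb{R}^N$ ($n=0,\dots,n_t$), and arbitrary boundary vectors $g_R^n\in\mathbb{R}^M$, $g_I^{n+\frac12}\in\mathbb{R}^M$ ($n=0,\dots,n_t-1$), satisfying for $n=0,\dots,n_t-1$: $\hbar D_V''\frac{\psi_R^{n+1}-\psi_R^n}{\Delta t}=H\psi_I^{n+\frac12}-H_\perp g_I^{n+\frac12}$ and $\hbar D_V''\frac{\psi_I^{n+\frac12}-\psi_I^{n-\frac12}}{\Delta t}=-H\psi_R^n+H_\perp g_R^n$. Let $\psi^n=\begin{bmatrix}\psi_R^n\\ \psi_I^{n-\frac12}\end{bmatrix}$, $g^{n+\frac12}=\begin{bmatrix}g_R^n\\ g_I^{n+\frac12}\end{bmatrix}$, $J_1=\begin{bmatrix}0&1\\-1&0\end{bmatrix}$. Total probability: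 $\mathcal{P}^n=(\psi^n)^T\mathbf{P}\psi^n$, $n=0,\dots,n_t$. Probability current: $\mathcal{I}_P^{n+\frac12}=\frac{2}{\hbar}\left(\frac{\psi^{n+1}+\psi^n}{2}\right)^T(J_1\otimes H_\perp)g^{n+\frac12}$, $n=0,\dots,n_t-1$. *)

(* Defs.v *)
From HB Require Import structures.
From mathcomp Require Import all_boot all_order all_algebra.
From mathcomp Require Import classical_sets reals.
From mathcomp.real_closed Require Export complex mxtens.
Set Implicit Arguments. Unset Strict Implicit. Unset Printing Implicit Defensive.
Import Order.TTheory GRing.Theory Num.Theory.
Local Open Scope ring_scope.

Section FDTDQ.
Variable R : realType.

(* Kronecker product (standard ordering: (i1,i2) |-> i1 * m2 + i2). *)
Definition kron {m n p q : nat} (A : 'M[R]_(m, n)) (B : 'M[R]_(p, q)) :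
  'M[R]_(m * p, n * q) := tensmx A B.

Definition Itil (p : nat) : 'M[R]_p :=
  \matrix_(i, j) (if i == j then
                    (if (i == 0%N :> nat) || (i == p.-1 :> nat) then 2^-1 else 1)
                  else 0).

Definition Wmx (p : nat) : 'M[R]_(p, p.+1) :=
  \matrix_(i, j) (((j : nat) == i.+1)%:R - ((j : nat) == i)%:R).

(* e{p,q}: q x 1 vector with 1 in (1-based) position p *)
Definition evec (p q : nat) : 'M[R]_(q, 1) :=
  \col_(i < q) ((i.+1 == p)%:R).

Definition bdiag {m n : nat} (A : 'M[R]_m) (B : 'M[R]_n) : 'M[R]_(m + n) :=
  block_mx A 0 0 B.

Definition cmod (z : R[i]) : R :=
  match z with Complex a b => Num.sqrt (a ^+ 2 + b ^+ 2) end.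
Definition spectral_radius {n : nat} (A : 'M[R]_n) : R :=
  sup [set cmod z | z in [set z : R[i] |
        eigenvalue (map_mx (fun x : R => x%:C%C) A) z]].

Variables (hbar mass dx dy dz : R) (nx ny nz : nat).

Local Notation Nn := ((nz.+1) * ((ny.+1) * (nx.+1)))%N.
Local Notation Ix := (1%:M : 'M[R]_(nx.+1)).
Local Notation Iy := (1%:M : 'M[R]_(ny.+1)).
Local Notation Iz := (1%:M : 'M[R]_(nz.+1)).

Definition DVpp : 'M[R]_Nn :=
  (dx * dy * dz) *: kron (Itil nz.+1) (kron (Itil ny.+1) (Itil nx.+1)).

Definition DVpp_isqrt : 'M[R]_Nn :=
  \matrix_(i, j) (if i == j then (Num.sqrt (DVpp i i))^-1 else 0).

Definition Dx := - kron Iz (kron Iy (Wmx nx)^T).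
Definition Dy := - kron Iz (kron (Wmx ny)^T Ix).
Definition Dz := - kron (Wmx nz)^T (kron Iy Ix).
Definition Dmx := row_mx Dx (row_mx Dy Dz).

Definition DSpp :=
  bdiag ((dy * dz) *: kron (Itil nz.+1) (kron (Itil ny.+1) (1%:M : 'M[R]_nx)))
   (bdiag ((dx * dz) *: kron (Itil nz.+1) (kron (1%:M : 'M[R]_ny) (Itil nx.+1)))
          ((dx * dy) *: kron (1%:M : 'M[R]_nz) (kron (Itil ny.+1) (Itil nx.+1)))).

Definition Dlp_inv :=
  bdiag (dx^-1 *: (1%:M : 'M[R]_(nz.+1 * (ny.+1 * nx))))
   (bdiag (dy^-1 *: (1%:M : 'M[R]_(nz.+1 * (ny * nx.+1))))
          (dz^-1 *: (1%:M : 'M[R]_(nz * (ny.+1 * nx.+1))))).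

Definition DU (U : 'cV[R]_Nn) : 'M[R]_Nn := diag_mx U^T.

Definition Hmx (U : 'cV[R]_Nn) : 'M[R]_Nn :=
  (hbar ^+ 2 / (2 * mass)) *: (Dmx *m DSpp *m Dlp_inv *m Dmx^T)
  + DVpp *m DU U.

Definition Pmx (dt : R) (U : 'cV[R]_Nn) : 'M[R]_(Nn + Nn) :=
  block_mx DVpp (- (dt / (2 * hbar)) *: Hmx U)
           (- (dt / (2 * hbar)) *: Hmx U) DVpp.

(* boundary ("hanging") variables; the trailing Kronecker factors of
   size 1 are removed by casts along muln1 / mul1n. *)
Definition LW := castmx (erefl, congr1 (muln nz.+1) (muln1 ny.+1))
                   (kron Iz (kron Iy (evec 1 nx.+1))).
Definition LE := castmx (erefl, congr1 (muln nz.+1) (muln1 ny.+1))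
                   (kron Iz (kron Iy (evec nx.+1 nx.+1))).
Definition LS := castmx (erefl, congr1 (muln nz.+1) (mul1n nx.+1))
                   (kron Iz (kron (evec 1 ny.+1) Ix)).
Definition LN := castmx (erefl, congr1 (muln nz.+1) (mul1n nx.+1))
                   (kron Iz (kron (evec ny.+1 ny.+1) Ix)).
Definition LB := castmx (erefl, mul1n (ny.+1 * nx.+1))
                   (kron (evec 1 nz.+1) (kron Iy Ix)).
Definition LT := castmx (erefl, mul1n (ny.+1 * nx.+1))
                   (kron (evec nz.+1 nz.+1) (kron Iy Ix)).
Definition Lmx := row_mx LW (row_mx LE (row_mx LS (row_mx LN (row_mx LB LT)))).

Local Notation Myz := (nz.+1 * ny.+1)%N.
Local Notation Mxz := (nz.+1 * nx.+1)%N.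
Local Notation Mxy := (ny.+1 * nx.+1)%N.
Local Notation Mall := (Myz + (Myz + (Mxz + (Mxz + (Mxy + Mxy)))))%N.

Definition Dnhat : 'M[R]_Mall :=
  bdiag (- 1%:M) (bdiag 1%:M (bdiag (- 1%:M) (bdiag 1%:M (bdiag (- 1%:M) 1%:M)))).

Definition DSbpp : 'M[R]_Mall :=
  bdiag ((dy * dz) *: kron (Itil nz.+1) (Itil ny.+1))
 (bdiag ((dy * dz) *: kron (Itil nz.+1) (Itil ny.+1))
 (bdiag ((dx * dz) *: kron (Itil nz.+1) (Itil nx.+1))
 (bdiag ((dx * dz) *: kron (Itil nz.+1) (Itil nx.+1))
 (bdiag ((dx * dy) *: kron (Itil ny.+1) (Itil nx.+1))
        ((dx * dy) *: kron (Itil ny.+1) (Itil nx.+1)))))).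

Definition Hperp : 'M[R]_(Nn, Mall) :=
  (hbar ^+ 2 / (2 * mass)) *: (Lmx *m Dnhat *m DSbpp).

(* J_1 (x) H_perp, written out as a 2 x 2 block matrix *)
Definition J1Hperp : 'M[R]_(Nn + Nn, Mall + Mall) :=
  block_mx 0 Hperp (- Hperp) 0.

Definition totprob (dt : R) (U : 'cV[R]_Nn) (psi : 'cV[R]_(Nn + Nn)) : R :=
  ((psi^T *m Pmx dt U *m psi) 0 0).

Definition probcurrent (psi_next psi : 'cV[R]_(Nn + Nn))
    (g : 'cV[R]_(Mall + Mall)) : R :=
  (2 / hbar) * (((2^-1 *: (psi_next + psi))^T *m J1Hperp *m g) 0 0).
  
End FDTDQ.

Notation Nnodes nx ny nz := ((nz.+1) * ((ny.+1) * (nx.+1)))%N.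
Notation Mbnd nx ny nz :=
  ((nz.+1 * ny.+1) + ((nz.+1 * ny.+1) + ((nz.+1 * nx.+1) + ((nz.+1 * nx.+1)
    + ((ny.+1 * nx.+1) + (ny.+1 * nx.+1))))))%N.

(* Main.v *)
Require Import Defs.
From HB Require Import structures.
From mathcomp Require Import all_boot all_order all_algebra.
From mathcomp Require Import classical_sets reals.
From mathcomp Require Import ring lra.
From mathcomp.real_closed Require Import mxtens.
Import Order.TTheory GRing.Theory Num.Theory.
Local Open Scope ring_scope.

Section Aux.
Variable R : realType.

Definition isdiag {n} (A : 'M[R]_n) := forall i j, i != j -> A i j = 0.

Lemma isdiag_sym n (A : 'M[R]_n) : isdiag A -> A^T = A.
Proof.
move=> dA; apply/matrixP=> i j; rewrite mxE.
case: (eqVneq i j) => [->//|ne]; by rewrite !dA // eq_sym.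
Qed.

Lemma isdiag_kron m n (A : 'M[R]_m) (B : 'M[R]_n) :
  isdiag A -> isdiag B -> isdiag (kron A B).
Proof.
move=> dA dB i j; case: (mxtens_indexP i) => i1 i2; case: (mxtens_indexP j) => j1 j2.
rewrite /kron tensmxE => ne.
case: (eqVneq i1 j1) => [e1|n1]; last by rewrite dA // mul0r.
case: (eqVneq i2 j2) => [e2|n2]; last by rewrite dB // mulr0.
by move: ne; rewrite e1 e2 eqxx.
Qed.

Lemma isdiag_Itil p : isdiag (Itil R p).
Proof. by move=> i j ne; rewrite mxE (negbTE ne). Qed.

Lemma isdiag_scale n c (A : 'M[R]_n) : isdiag A -> isdiag (c *: A).
Proof. by move=> dA i j ne; rewrite mxE dA // mulr0. Qed.

Lemma isdiag_diag n (d : 'rV[R]_n) : isdiag (diag_mx d).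
Proof. by move=> i j ne; rewrite mxE (negbTE ne) mulr0n. Qed.

Lemma isdiag_scalar n (c : R) : isdiag (c%:M : 'M_n).
Proof. by move=> i j ne; rewrite mxE (negbTE ne) mulr0n. Qed.

Lemma isdiag_comm n (A : 'M[R]_n) (B : 'cV[R]_n) : isdiag A -> A *m diag_mx B^T = diag_mx B^T *m A.
Proof.
move=> dA; apply/matrixP=> i j; rewrite mul_mx_diag mul_diag_mx !mxE.
case: (eqVneq i j) => [->|ne]; first by rewrite mulrC.
by rewrite dA // mulr0 mul0r.
Qed.

Lemma sym_kron m n (A : 'M[R]_m) (B : 'M[R]_n) : A^T = A -> B^T = B -> (kron A B)^T = kron A B.
Proof. by move=> hA hB; rewrite /kron trmx_tens hA hB. Qed.

Lemma bdiag_mul m n (A C : 'M[R]_m) (B D : 'M[R]_n) :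
  bdiag A B *m bdiag C D = bdiag (A *m C) (B *m D).
Proof. by rewrite /bdiag mulmx_block !mulmx0 !mul0mx !addr0 !add0r. Qed.

Lemma bdiag_tr m n (A : 'M[R]_m) (B : 'M[R]_n) : (bdiag A B)^T = bdiag A^T B^T.
Proof. by rewrite /bdiag tr_block_mx !trmx0. Qed.

Lemma sym_Itil p : (Itil R p)^T = Itil R p.
Proof. exact/isdiag_sym/isdiag_Itil. Qed.

Lemma sym_DVpp (dx dy dz : R) nx ny nz : isdiag (DVpp dx dy dz nx ny nz).
Proof. by apply/isdiag_scale/isdiag_kron/isdiag_kron; apply: isdiag_Itil. Qed.

Lemma sym_SL (dx dy dz : R) nx ny nz :
  (DSpp dx dy dz nx ny nz *m Dlp_inv dx dy dz nx ny nz)^T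
  = DSpp dx dy dz nx ny nz *m Dlp_inv dx dy dz nx ny nz.
Proof.
rewrite /DSpp /Dlp_inv !bdiag_mul !bdiag_tr -!scalemxAr !mulmx1 !linearZ /=.
rewrite !scalerA ![_^-1 * _]mulrC !isdiag_sym //; repeat apply: isdiag_kron;
  (exact: isdiag_Itil || exact: isdiag_scalar).
Qed.

Lemma sym_H (hbar mass dx dy dz : R) nx ny nz (U : 'cV[R]_(Nnodes nx ny nz)) :
  (Hmx hbar mass dx dy dz U)^T = Hmx hbar mass dx dy dz U.
Proof.
rewrite /Hmx linearD linearZ /= !trmx_mul trmxK.
rewrite /DU tr_diag_mx (@isdiag_sym _ _ (sym_DVpp _ _ _ _ _ _)) -isdiag_comm; last exact: sym_DVpp.
congr (_ *: _ + _).
by rewrite -(mulmxA (Dmx _ _ _ _) (DSpp _ _ _ _ _ _)) -(sym_SL dx dy dz nx ny nz) trmx_mul !mulmxA.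
Qed.

Definition bl {n m} (u : 'cV[R]_n) (M : 'M[R]_(n, m)) (v : 'cV[R]_m) : R :=
  (u^T *m M *m v) 0 0.

Lemma blDl n m u1 u2 (M : 'M[R]_(n,m)) v : bl (u1 + u2) M v = bl u1 M v + bl u2 M v.
Proof. by rewrite /bl linearD /= !mulmxDl mxE. Qed.
Lemma blDr n m u (M : 'M[R]_(n,m)) v1 v2 : bl u M (v1 + v2) = bl u M v1 + bl u M v2.
Proof. by rewrite /bl mulmxDr mxE. Qed.
Lemma blNr n m u (M : 'M[R]_(n,m)) v : bl u M (- v) = - bl u M v.
Proof. by rewrite /bl mulmxN mxE. Qed.
Lemma blNl n m u (M : 'M[R]_(n,m)) v : bl (- u) M v = - bl u M v.
Proof. by rewrite /bl linearN /= !mulNmx mxE. Qed.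
Lemma blZr n m u (M : 'M[R]_(n,m)) c v : bl u M (c *: v) = c * bl u M v.
Proof. by rewrite /bl -scalemxAr mxE. Qed.
Lemma blZl n m u (M : 'M[R]_(n,m)) c v : bl (c *: u) M v = c * bl u M v.
Proof. by rewrite /bl linearZ /= -!scalemxAl mxE. Qed.
Lemma blZm n m u (M : 'M[R]_(n,m)) c v : bl u (c *: M) v = c * bl u M v.
Proof. by rewrite /bl -scalemxAr -scalemxAl mxE. Qed.
Lemma blNm n m u (M : 'M[R]_(n,m)) v : bl u (- M) v = - bl u M v.
Proof. by rewrite /bl mulmxN mulNmx mxE. Qed.
Lemma bl_sym n (M : 'M[R]_n) u v : M^T = M -> bl u M v = bl v M u.
Proof.
move=> sM; rewrite /bl -[in RHS]sM.
by rewrite -[in RHS](trmxK u) -!trmx_mul mulmxA [RHS]mxE.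
Qed.
Lemma bl_mul n m (u : 'cV[R]_n) (M : 'M[R]_(n,m)) v : bl u M v = (u^T *m (M *m v)) 0 0.
Proof. by rewrite /bl mulmxA. Qed.

Lemma bl_block n1 n2 m1 m2 (a : 'cV[R]_n1) (b : 'cV[R]_n2) A B C D (x : 'cV[R]_m1) (y : 'cV[R]_m2) :
  bl (col_mx a b) (block_mx A B C D) (col_mx x y)
  = bl a A x + bl a B y + bl b C x + bl b D y.
Proof.
rewrite /bl tr_col_mx mul_row_block mul_row_col !mulmxDl !mxE.
ring.
Qed.

Lemma e00D m n (A B : 'M[R]_(m,n)) i j : (A + B) i j = A i j + B i j.
Proof. by rewrite mxE. Qed.
Lemma e00N m n (A : 'M[R]_(m,n)) i j : (- A) i j = - A i j.
Proof. by rewrite mxE. Qed.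

Lemma bl0 n m u v : bl u (0 : 'M[R]_(n,m)) v = 0.
Proof. by rewrite /bl mulmx0 mul0mx mxE. Qed.

Lemma comb (hbar dt DA DA' DB DB' X Y Hab Ha'b' Hab' p1 p2 p3 p4 : R) :
  hbar != 0 -> dt != 0 ->
  hbar * (dt^-1 * (DA' + X - (X + DA))) = Ha'b' + Hab' - (p1 + p2) ->
  hbar * (dt^-1 * (DB' + Y - (Y + DB))) = - (Hab' + Hab) + (p3 + p4) ->
  DA' + - (dt / (2 * hbar)) * Ha'b' + - (dt / (2 * hbar)) * Ha'b' + DB' -
  (DA + - (dt / (2 * hbar)) * Hab + - (dt / (2 * hbar)) * Hab + DB) =
  - dt * (2 / hbar * (2^-1 * (0 + 0 + (p1 + p2) - (p3 + p4) + (0 + 0)))).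
Proof.
move=> h0 t0 f1 f2.
have -> : DA' = DA + dt / hbar * (Ha'b' + Hab' - (p1 + p2)).
  by rewrite -f1; field; rewrite h0 t0.
have -> : DB' = DB + dt / hbar * (- (Hab' + Hab) + (p3 + p4)).
  by rewrite -f2; field; rewrite h0 t0.
by field; rewrite h0.
Qed.

Lemma step N M (D H : 'M[R]_N) (Hp : 'M[R]_(N, M)) (hbar dt : R) a a' b b' gR gI :
  hbar != 0 -> dt != 0 -> D^T = D -> H^T = H ->
  hbar *: (D *m (dt^-1 *: (a' - a))) = H *m b' - Hp *m gI ->
  hbar *: (D *m (dt^-1 *: (b' - b))) = -(H *m a) + Hp *m gR ->
  bl (col_mx a' b') (block_mx D (- (dt / (2 * hbar)) *: H) (- (dt / (2 * hbar)) *: H) D) (col_mx a' b')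
  - bl (col_mx a b) (block_mx D (- (dt / (2 * hbar)) *: H) (- (dt / (2 * hbar)) *: H) D) (col_mx a b)
  = - dt * ((2 / hbar) * bl (2^-1 *: (col_mx a' b' + col_mx a b)) (block_mx 0 Hp (- Hp) 0) (col_mx gR gI)).
Proof.
move=> h0 t0 sD sH e1 e2.
have f1 : hbar * (dt^-1 * (bl (a'+a) D a' - bl (a'+a) D a)) = bl (a'+a) H b' - bl (a'+a) Hp gI.
  move: (congr1 (fun Z => ((a'+a)^T *m Z) 0 0) e1) => /=.
  by rewrite -scalemxAr mxE -bl_mul blZr blDr blNr mulmxBr e00D e00N -!bl_mul.
have f2 : hbar * (dt^-1 * (bl (b'+b) D b' - bl (b'+b) D b)) = - bl (b'+b) H a + bl (b'+b) Hp gR.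
  move: (congr1 (fun Z => ((b'+b)^T *m Z) 0 0) e2) => /=.
  by rewrite -scalemxAr mxE -bl_mul blZr blDr blNr mulmxDr mulmxN e00D e00N -!bl_mul.
rewrite blZl add_col_mx !bl_block !blZm !blNm !blDl.
rewrite !blDl in f1 f2.
rewrite !bl0 (@bl_sym _ _ b' a' sH) (@bl_sym _ _ b a sH).
rewrite (@bl_sym _ _ a a' sD) (@bl_sym _ _ b b' sD) (@bl_sym _ _ b' a sH) (@bl_sym _ _ b a sH) in f1 f2.
exact (comb _ _ _ _ _ _ _ _ _ _ _ _ _ _ _ h0 t0 f1 f2).
Qed.
End Aux.

Theorem lemma2 (R : realType) (hbar mass dx dy dz dt : R) (nx ny nz nt : nat)
  (U : 'cV[R]_(Nnodes nx ny nz))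
  (psiR psiI : nat -> 'cV[R]_(Nnodes nx ny nz))
  (gR gI : nat -> 'cV[R]_(Mbnd nx ny nz))
  (Pdag Idag : nat -> R) :
  0 < hbar -> 0 < mass -> 0 < dx -> 0 < dy -> 0 < dz ->
  (0 < nx)%N -> (0 < ny)%N -> (0 < nz)%N -> (0 < nt)%N ->
  0 < dt ->
  dt < 2 / spectral_radius
         (hbar^-1 *: (DVpp_isqrt dx dy dz nx ny nz
                       *m Hmx hbar mass dx dy dz U
                       *m DVpp_isqrt dx dy dz nx ny nz)) ->
  (* FDTD-Q scheme; psiI k stands for psi_I^{k-1/2}, gI n for g_I^{n+1/2},
     gR n for g_R^n *)
  (forall n, (n < nt)%N ->
     hbar *: (DVpp dx dy dz nx ny nz *m (dt^-1 *: (psiR n.+1 - psiR n)))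
     = Hmx hbar mass dx dy dz U *m psiI n.+1
       - Hperp hbar mass dx dy dz nx ny nz *m gI n) ->
  (forall n, (n < nt)%N ->
     hbar *: (DVpp dx dy dz nx ny nz *m (dt^-1 *: (psiI n.+1 - psiI n)))
     = - (Hmx hbar mass dx dy dz U *m psiR n)
       + Hperp hbar mass dx dy dz nx ny nz *m gR n) ->
  (forall n, (n <= nt)%N -> 0 <= Pdag n) ->
  (forall n, (n < nt)%N -> (Pdag n.+1 - Pdag n) / dt = - Idag n) ->
  (forall n, (n < nt)%N ->
     probcurrent hbar mass dx dy dz
       (col_mx (psiR n.+1) (psiI n.+1)) (col_mx (psiR n) (psiI n))
       (col_mx (gR n) (gI n)) = - Idag n) ->
  forall n, (n <= nt)%N ->
    totprob hbar mass dx dy dz dt U (col_mx (psiR n) (psiI n))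
    <= totprob hbar mass dx dy dz dt U (col_mx (psiR 0) (psiI 0)) + Pdag 0.
Proof.
move=> hb ms _ _ _ _ _ _ _ dtp _ e1 e2 Pd0 ePd ecur.
have inv : forall n, (n <= nt)%N ->
  totprob hbar mass dx dy dz dt U (col_mx (psiR n) (psiI n)) + Pdag n
  = totprob hbar mass dx dy dz dt U (col_mx (psiR 0) (psiI 0)) + Pdag 0.
  elim=> [//|n IH] Hn.
  have Hn' : (n < nt)%N := Hn.
  rewrite -IH; last exact: ltnW.
  have st : totprob hbar mass dx dy dz dt U (col_mx (psiR n.+1) (psiI n.+1))
     - totprob hbar mass dx dy dz dt U (col_mx (psiR n) (psiI n))
     = - dt * probcurrent hbar mass dx dy dz
       (col_mx (psiR n.+1) (psiI n.+1)) (col_mx (psiR n) (psiI n))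
       (col_mx (gR n) (gI n)).
    exact (step _ _ _ _ _ _ _ _ _ _ _ _ _ _ (lt0r_neq0 hb) (lt0r_neq0 dtp)
      (isdiag_sym _ _ _ (sym_DVpp _ dx dy dz nx ny nz)) (sym_H _ hbar mass dx dy dz nx ny nz U) (e1 n Hn') (e2 n Hn')).
  have pd := ePd n Hn'.
  rewrite (ecur n Hn') in st.
  have pd' : Pdag n.+1 = Pdag n - Idag n * dt.
    by rewrite -[Idag n]opprK -pd; field; rewrite lt0r_neq0.
  rewrite pd'.
  move/eqP: st; rewrite subr_eq => /eqP ->.
  ring.
move=> n Hn; rewrite -(inv n Hn) lerDl; exact: Pd0.
Qed.
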